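(* Let $A$ be a Frobenius algebra over a field $\mathbb{k}$. Then $\dim_{\mathbb{k}}A=\operatorname{Frobdim}A$.
   Context: A Frobenius algebra over a field $\mathbb{k}$ is a finite-dimensional associative unital $\mathbb{k}$-algebra $A$ with a nondegenerate bilinear form $B:A\times A\to\mathbb{k}$ with $B(ab,c)=B(a,bc)$. The Frobenius space $\mathcal{E}_A$ is the $\mathbb{k}$-vector space of all $\mathbb{k}$-linear maps $\Delta:A\to A\otimes_{\mathbb{k}}A$ that are $A$-bimodule homomorphisms (with $a(x\otimes y)b=ax\otimes yb$), and $\operatorname{Frobdim}A=\dim_{\mathbb{k}}\mathcal{E}_A$. *)

(* Defs.v *)
From HB Require Import structures.
From mathcomp Require Import all_boot all_order all_algebra all_field.
Set Implicit Arguments. Unset Strict Implicit. Unset Printing Implicit Defensive.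
Import GRing.Theory.
Local Open Scope ring_scope.

Definition frobenius_form (K : fieldType) (A : falgType K) (B : A -> A -> K^o) :=
  [/\ (forall a, linear (B a)),
      (forall b, linear (fun a => B a b)),
      (forall a, (forall b, B a b = 0) -> a = 0),
      (forall b, (forall a, B a b = 0) -> b = 0)
    & (forall a b c, B (a * b) c = B a (b * c))].

(* Tensor product A (x)_K A, realised (A finite-dimensional) as
   Hom_K(A^*, A), with x (x) y := (f |-> f x *: y). *)
Definition tens (K : fieldType) (A : falgType K) : vectType K :=
  'Hom('Hom(A, K^o), A).

Definition tensor (K : fieldType) (A : falgType K) (x y : A) : tens A :=
  linfun (fun f : 'Hom(A, K^o) => f x *: y).

(* Bimodule actions: a.(x (x) y) = (a x) (x) y ;  (x (x) y).b = x (x) (y b). *)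
Definition tens_lact (K : fieldType) (A : falgType K) (a : A) (t : tens A)
  : tens A := linfun (fun f : 'Hom(A, K^o) => t (f \o amull a)%VF).

Definition tens_ract (K : fieldType) (A : falgType K) (t : tens A) (b : A)
  : tens A := linfun (fun f : 'Hom(A, K^o) => t f * b).

Definition is_bimod_hom (K : fieldType) (A : falgType K) (D : 'Hom(A, tens A)) :=
  (forall a x, D (a * x) = tens_lact a (D x)) /\
  (forall x b, D (x * b) = tens_ract (D x) b).

(* Main.v *)
Require Import Defs.
From HB Require Import structures.
From mathcomp Require Import all_boot all_order all_algebra all_field.
Local Open Scope ring_scope.
Import GRing.Theory.
Set Implicit Arguments. Unset Strict Implicit.

Section Frob.
Variables (K : fieldType) (A : falgType K) (B : A -> A -> K^o).
Hypothesis hB : frobenius_form B.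

Lemma linfunE' (aT rT : vectType K) (f : aT -> rT) : linear f -> forall x, linfun f x = f x.
Proof.
move=> hf x.
pose F : {linear aT -> rT} := HB.pack f (GRing.isSemilinear.Build K aT rT _ f (GRing.semilinear_linear hf)).
exact: (lfunE F x).
Qed.

Lemma tens_lactE a (t : tens A) f : tens_lact a t f = t (f \o amull a)%VF.
Proof.
rewrite linfunE' // => k f1 f2; by rewrite comp_lfunDl -comp_lfunZl linearP.
Qed.

Lemma tens_ractE (t : tens A) b f : tens_ract t b f = t f * b.
Proof.
rewrite linfunE' // => k f1 f2; by rewrite linearP mulrDl scalerAl.
Qed.

Definition phi : 'Hom(A, 'Hom(A, K^o)) := linfun (fun b => linfun (B b)).

Lemma phiE b y : phi b y = B b y.
Proof.
have [h1 h2 h3 h4 h5] := hB.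
rewrite linfunE'; first by rewrite linfunE'.
move=> k b1 b2; apply/lfunP => z; rewrite add_lfunE scale_lfunE !linfunE' //.
exact: h2.
Qed.

Lemma phi_inj : lker phi == 0%VS.
Proof.
have [h1 h2 h3 h4 h5] := hB.
apply/lker0P => b1 b2 e.
apply/eqP; rewrite -subr_eq0; apply/eqP; apply: h3 => y.
by rewrite -phiE linearB /= e subrr zero_lfunE.
Qed.

Lemma phi_full : limg phi = fullv.
Proof.
apply/eqP; rewrite eqEdim subvf /= limg_dim_eq ?capfv ?(eqP phi_inj) //.
have e : dim 'Hom(A, K^o) = dim A by exact: muln1.
by rewrite !dimvf e.
Qed.

Definition phiinv := (phi^-1)%VF.

Lemma phiK f : phi (phiinv f) = f.
Proof. by rewrite limg_lfunVK // phi_full memvf. Qed.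

Lemma phiinvK b : phiinv (phi b) = b.
Proof. exact: lker0_lfunK phi_inj b. Qed.

Definition tc (c : A) : tens A := linfun (fun f => c * phiinv f).

Lemma tcE c f : tc c f = c * phiinv f.
Proof. rewrite linfunE' // => k f1 f2; by rewrite linearP mulrDr scalerAr. Qed.

Lemma phiinv_amull f b : phiinv (f \o amull b)%VF = phiinv f * b.
Proof.
have [h1 h2 h3 h4 h5] := hB.
apply: (lker0P phi_inj); rewrite phiK; apply/lfunP => y.
by rewrite phiE comp_lfunE lfunE /= h5 -phiE phiK.
Qed.

Lemma tc_central c b : tens_lact b (tc c) = tens_ract (tc c) b.
Proof.
by apply/lfunP => f; rewrite tens_lactE tens_ractE !tcE phiinv_amull mulrA.
Qed.

Lemma lact_mul (a b : A) (t : tens A) : tens_lact (a * b) t = tens_lact a (tens_lact b t).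
Proof.
apply/lfunP => f; rewrite !tens_lactE; congr (t _).
by apply/lfunP => y; rewrite !comp_lfunE !lfunE /= mulrA.
Qed.

Lemma lact_ract (a : A) (t : tens A) (b : A) : tens_lact a (tens_ract t b) = tens_ract (tens_lact a t) b.
Proof. by apply/lfunP => f; rewrite !(tens_lactE, tens_ractE). Qed.

Lemma lact1 (t : tens A) : tens_lact 1 t = t.
Proof.
apply/lfunP => f; rewrite tens_lactE; congr (t _).
by apply/lfunP => y; rewrite !comp_lfunE !lfunE /= mul1r.
Qed.

Lemma lact_lin t : linear (fun x : A => tens_lact x t).
Proof.
move=> k x y; apply/lfunP => f.
rewrite add_lfunE scale_lfunE !tens_lactE linearP /= comp_lfunDr -comp_lfunZr.
by rewrite linearP.
Qed.

Lemma lact_lin2 x : linear (fun c : A => tens_lact x (tc c)).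
Proof.
move=> k c d; apply/lfunP => f.
by rewrite add_lfunE scale_lfunE !tens_lactE !tcE mulrDl scalerAl.
Qed.

Definition Phi : 'Hom(A, 'Hom(A, tens A)) :=
  linfun (fun c => linfun (fun x => tens_lact x (tc c))).

Lemma PhiE c x : Phi c x = tens_lact x (tc c).
Proof.
rewrite linfunE'; first by rewrite linfunE' //; exact: lact_lin.
move=> k c1 d1; apply/lfunP => y; rewrite add_lfunE scale_lfunE !linfunE' //;
  try exact: lact_lin.
exact: lact_lin2.
Qed.

Lemma Phi_inj : lker Phi == 0%VS.
Proof.
apply/lker0P => c d e.
have := congr1 (fun D : 'Hom(A, tens A) => D 1 (phi 1)) e.
by rewrite /= !PhiE !lact1 !tcE phiinvK !mulr1.
Qed.

End Frob.

Theorem corollary9 (K : fieldType) (A : falgType K) (B : A -> A -> K^o) :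
  frobenius_form B ->
  exists E : {vspace 'Hom(A, tens A)},
    (forall D : 'Hom(A, tens A), D \in E <-> is_bimod_hom D) /\
    \dim E = \dim {:A}.
Proof.
move=> hB; exists (limg (Phi B)); split; last first.
  by rewrite limg_dim_eq // capfv (eqP (Phi_inj hB)).
move=> D; split.
  case/memv_imgP => c _ ->; split.
    by move=> a x; rewrite !PhiE lact_mul.
  by move=> x b; rewrite !PhiE lact_mul (tc_central hB) lact_ract.
case=> hl hr.
have hc : forall b, tens_lact b (D 1) = tens_ract (D 1) b.
  by move=> b; rewrite -hl -hr mulr1 mul1r.
apply/memv_imgP; exists (D 1 (phi B 1)); first exact: memvf.
apply/lfunP => x; rewrite PhiE.
have -> : tc B (D 1 (phi B 1)) = D 1.
  apply/lfunP => f; rewrite tcE.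
  rewrite -[in RHS](phiK hB f); set b := phiinv B f.
  have -> : phi B b = (phi B 1 \o amull b)%VF.
    have [h1 h2 h3 h4 h5] := hB.
    by apply/lfunP => y; rewrite comp_lfunE lfunE /= !(phiE hB) -h5 mul1r.
  by rewrite -tens_lactE hc tens_ractE.
by rewrite -hl mulr1.
Qed.
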